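(* Let $G$ be a finite simple graph without isolated vertices, and consider any position of the Disjoint Domination Game on $G$ in which neither (s* ) nor (d* ) holds. Then the player to move has at least one legal move.
   Context: For a vertex $v$, $N[v]$ denotes its closed neighborhood. In the Disjoint Domination Game on $G$, two players (Dom and Sepy) alternately color vertices with colors from $\{p,b\}$ (either player may use either color); $V_p,V_b$ denote the current sets of vertices of each color. A legal move is a choice of a vertex $v$ and a color $c$ such that (i) $v$ is uncolored and (ii) some $u\in N[v]$ satisfies $N[u]\cap V_c=\emptyset$; then $v$ gets color $c$. Condition (s* ): some vertex $v$ has $N[v]\subseteq V_p$ or $N[v]\subseteq V_b$. Condition (d* ): both $V_p$ and $V_b$ are dominating sets of $G$. *)

(* Defs.v *)
From mathcomp Require Import all_boot.
Set Implicit Arguments. Unset Strict Implicit. Unset Printing Implicit Defensive.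

Definition simple_graph (T : finType) (e : rel T) : Prop :=
  symmetric e /\ irreflexive e.

Definition no_isolated (T : finType) (e : rel T) : Prop :=
  forall v : T, exists u : T, e v u.

Definition cnbhd (T : finType) (e : rel T) (v : T) : {set T} :=
  [set u | (u == v) || e v u].

Inductive color := cp | cb.

Record position (T : finType) := Pos { Vp : {set T}; Vb : {set T} }.

Definition Vc (T : finType) (P : position T) (c : color) : {set T} :=
  match c with cp => Vp P | cb => Vb P end.

Definition uncolored (T : finType) (P : position T) (v : T) : bool :=
  (v \notin Vp P) && (v \notin Vb P).

Definition legal_move (T : finType) (e : rel T) (P : position T) (v : T) (c : color) : Prop :=
  uncolored P v /\
  exists2 u, u \in cnbhd e v & cnbhd e u :&: Vc P c = set0.

Definition play (T : finType) (P : position T) (v : T) (c : color) : position T :=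
  match c with
  | cp => Pos (v |: Vp P) (Vb P)
  | cb => Pos (Vp P) (v |: Vb P)
  end.

(* Positions of the game: reachable from the empty colouring by legal moves
   (either player may make any legal move, so who moved is irrelevant). *)
Inductive reachable (T : finType) (e : rel T) : position T -> Prop :=
  | reach0 : reachable e (Pos set0 set0)
  | reachS P v c : reachable e P -> legal_move e P v c -> reachable e (play P v c).

Definition dominating (T : finType) (e : rel T) (D : {set T}) : Prop :=
  forall v : T, cnbhd e v :&: D != set0.

Definition cond_s (T : finType) (e : rel T) (P : position T) : Prop :=
  exists v : T, (cnbhd e v \subset Vp P) \/ (cnbhd e v \subset Vb P).

Definition cond_d (T : finType) (e : rel T) (P : position T) : Prop :=
  dominating e (Vp P) /\ dominating e (Vb P).

(* Main.v *)
Require Import Defs.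
From mathcomp Require Import all_boot.

Lemma helper (T : finType) (e : rel T) (P : position T) (c : color) (w : T) :
  symmetric e ->
  ~ cond_s e P -> cnbhd e w :&: Vc P c = set0 ->
  exists (v : T) (c : color), legal_move e P v c.
Proof.
move=> sym ns H.
case: (boolP [exists v in cnbhd e w, uncolored P v]).
  case/existsP=> v /andP [vin unc]; exists v, c; split=> //.
  exists w => //; move: vin; rewrite !inE => /orP [/eqP ->|]; first by rewrite eqxx.
  by rewrite sym orbC => ->.
move=> /existsPn Hall; exfalso; apply: ns; exists w.
have Hc : forall x, x \in cnbhd e w -> x \notin Vc P c.
  move=> x xin; apply/negP=> xc.
  have : x \in cnbhd e w :&: Vc P c by rewrite inE xin xc.
  by rewrite H inE.
case: c H Hc => H Hc /=.
- right; apply/subsetP=> x xin.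
  move: (Hall x); rewrite xin /= /uncolored (negbTE (Hc x xin)) /=.
  by rewrite negbK.
- left; apply/subsetP=> x xin.
  move: (Hall x); rewrite xin /= /uncolored (negbTE (Hc x xin)) andbT.
  by rewrite negbK.
Qed.

Theorem lemma1 (T : finType) (e : rel T) :
  simple_graph e -> no_isolated e ->
  forall P : position T, reachable e P ->
  ~ cond_s e P -> ~ cond_d e P ->
  exists (v : T) (c : color), legal_move e P v c.
Proof.
move=> [sym _] _ P _ ns nd.
case: (boolP [forall v, cnbhd e v :&: Vp P != set0]) => Hp.
  case: (boolP [forall v, cnbhd e v :&: Vb P != set0]) => Hb.
    exfalso; apply: nd; split=> v.
      exact: (forallP Hp v).
    exact: (forallP Hb v).
  move/forallPn: Hb => [w]; rewrite negbK => /eqP Hw.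
  exact: (@helper _ _ _ cb w sym).
move/forallPn: Hp => [w]; rewrite negbK => /eqP Hw.
exact: (@helper _ _ _ cp w sym).
Qed.
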